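(* Let $1\le Q<P$ be integers and let $\bm{G}\in\mathbb{R}^{Q\times P}$ be the generator matrix of a real $(P,Q)$ MDS code. Consider the channel $\mathbb{Z}=\bm{G}^T\mathbb{Q}+\mathbb{E}$ under the probabilistic error model described in the context. Then there is a decoder, which given the output $\bm{z}$ either declares ''no errors'', outputs an estimate $\widehat{\bm{e}}\in\mathbb{R}^P$ of the error vector, or declares ''decoding failure'', such that for every error pattern $\mathcal{A}\subseteq\{0,\dots,P-1\}$: (1) if $\mathcal{A}\neq\emptyset$ (i.e. $\mathbb{E}\neq\bm{0}$), then with probability $1$ the decoder detects that errors occurred (it does not declare ''no errors''), regardless of $|\mathcal{A}|$; (2) if $|\mathcal{A}|\le P-Q-1$, then with probability $1$ the decoder's estimate equals the true error vector $\mathbb{E}$ (hence $\mathbb{Q}$ is recovered exactly), without the decoder knowing $|\mathcal{A}|$ in advance; (3) if $|\mathcal{A}|> P-Q-1$, then with probability $1$ the decoder declares a ''decoding failure''.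
   Context: A real $(P,Q)$ MDS code has generator matrix $\bm{G}\in\mathbb{R}^{Q\times P}$ such that every $Q$ columns of $\bm{G}$ are linearly independent; codewords are $\bm{G}^T\bm{q}$ for $\bm{q}\in\mathbb{R}^Q$. Probabilistic error model: the received vector is $\mathbb{Z}=\bm{G}^T\mathbb{Q}+\mathbb{E}\in\mathbb{R}^P$, where $\mathbb{Q}$ is a random vector in $\mathbb{R}^Q$ independent of $\mathbb{E}$; the set $\mathcal{A}$ of error locations can have any cardinality from $0$ to $P$ and may be chosen adversarially (independently of the error values), and given $\mathcal{A}$ the entries of $\mathbb{E}$ indexed by $\mathcal{A}$ are i.i.d. Gaussian (nondegenerate) random variables while the remaining entries are $0$. *)

(* Defs.v *)
From HB Require Import structures.
From mathcomp Require Import all_boot all_order all_algebra.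
From mathcomp Require Import all_classical all_reals all_analysis.
Set Implicit Arguments. Unset Strict Implicit. Unset Printing Implicit Defensive.
Import Order.TTheory GRing.Theory Num.Theory.
Local Open Scope classical_set_scope.
Local Open Scope ring_scope.

(* Real (p,q) MDS code: generator G : q x p, every q columns linearly
   independent, i.e. for every injective choice f of q column indices the
   q x q submatrix of those columns has linearly independent columns. *)
Definition MDS_gen (R : fieldType) (q p : nat) (G : 'M[R]_(q, p)) : Prop :=
  forall f : 'I_q -> 'I_p, injective f -> row_free (colsub f G)^T.

Inductive dec_out (R : Type) (p : nat) : Type :=
| NoErrors
| Estimate of 'cV[R]_p
| Failure.
Arguments NoErrors {R p}.
Arguments Failure {R p}.

Definition dec_estimate (R : fieldType) (p : nat) (o : dec_out R p)
  : option 'cV[R]_p :=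
  match o with
  | NoErrors => Some 0
  | Estimate e => Some e
  | Failure => None
  end.

Definition preimg_on (T R : Type) (n : nat) (X : 'I_n -> T -> R)
  (B : 'I_n -> set R) (S : {set 'I_n}) : set T :=
  \big[setI/setT]_(i in S) (X i @^-1` B i).

(* Independence of the random vectors (X_i)_{i in S} and (Y_j)_{j in S'}
   (product rule on the generating pi-system of measurable rectangles). *)
Definition indep_vecs (d : measure_display) (T : measurableType d)
  (R : realType) (P : probability T R) (n m : nat)
  (X : 'I_n -> T -> R) (S : {set 'I_n}) (Y : 'I_m -> T -> R) (S' : {set 'I_m})
  : Prop :=
  forall (B : 'I_n -> set R) (C : 'I_m -> set R),
    (forall i, measurable (B i)) -> (forall j, measurable (C j)) ->
    P (preimg_on X B S `&` preimg_on Y C S') =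
    (P (preimg_on X B S) * P (preimg_on Y C S'))%E.

Definition iid_normal_on (d : measure_display) (T : measurableType d)
  (R : realType) (P : probability T R) (n : nat)
  (E : 'I_n -> T -> R) (A : {set 'I_n}) (mu s : R) : Prop :=
  forall C : 'I_n -> set R, (forall j, measurable (C j)) ->
    P (preimg_on E C A) = (\prod_(j in A) normal_prob mu s (C j))%E.

Definition vec_of (T R : Type) (n : nat) (X : 'I_n -> T -> R) (w : T)
  : 'cV[R]_n := \col_i X i w.

(* Main.v *)
Require Import Defs.
From HB Require Import structures.
From mathcomp Require Import all_boot all_order all_algebra.
From mathcomp Require Import all_classical all_reals all_analysis.
From mathcomp Require Import measurable_realfun.
From mathcomp Require Import ring.
From mathcomp Require Import zify.
Import Order.TTheory GRing.Theory Num.Theory.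
Local Open Scope classical_set_scope.
Local Open Scope ring_scope.
Set Implicit Arguments. Unset Strict Implicit. Unset Printing Implicit Defensive.

Local Open Scope ereal_scope.
Lemma GRID (R : realType) d (T : measurableType d) (Pr : probability T R)
  (X Z : T -> R) (NB : set R -> \bar R) (F : nat -> set R) (b : R) :
  (forall n, Pr (X @^-1` F n `&` Z @^-1` F n) = NB (F n) * Pr (Z @^-1` F n)) ->
  (forall n, measurable (X @^-1` F n `&` Z @^-1` F n)) ->
  (forall n, measurable (Z @^-1` F n)) ->
  trivIset setT F -> (forall n, NB (F n) <= b%:E) -> (forall n, 0 <= NB (F n)) ->
  Pr (\bigcup_n (X @^-1` F n `&` Z @^-1` F n)) <= b%:E.
Proof.
move=> HP mXZ mZ tF NBb NB0.
have b0 : (0 <= b)%R by rewrite -lee_fin (le_trans (NB0 0%N)).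
apply: (le_trans (measure_sigma_subadditive _ mXZ (bigcup_measurable (fun n _ => mXZ n)) (@subset_refl _ _))).
apply: (@le_trans _ _ (\sum_(n <oo) (b%:E * Pr (Z @^-1` F n)))).
  apply: lee_nneseries => [n _ _|n _]; first exact: measure_ge0.
  rewrite /= HP.
  apply: lee_wpmul2r => //; exact: measure_ge0.
rewrite nneseriesZl; last by move=> n _; exact: measure_ge0.
rewrite -measure_semi_bigcup //.
- rewrite -[X in _ <= X]mule1; apply: lee_wpmul2l; first by rewrite lee_fin.
  apply: probability_le1; exact: bigcup_measurable.
- move=> i j _ _ [x [Fi Fj]]; exact: (tF i j I I (ex_intro _ (Z x) (conj Fi Fj))).
- exact: bigcup_measurable.
Qed.

Local Close Scope ereal_scope.
Local Open Scope ereal_scope.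
Lemma NBbound (R : realType) (m s : R) (A : set R) : (0 < s)%R -> measurable A ->
  normal_prob m s A <= (normal_peak s)%:E * lebesgue_measure A.
Proof.
move=> s0 mA; rewrite /normal_prob.
rewrite -integral_cst //.
apply: ge0_le_integral => //.
- by move=> x _; rewrite lee_fin normal_pdf_ge0.
- apply/measurable_EFinP; apply: measurable_funTS; exact: measurable_normal_pdf.
- by move=> x _; rewrite lee_fin normal_pdf_ub // gt_eqF.
Qed.

Lemma NB_co (R : realType) (m s x y : R) : (0 < s)%R -> (x <= y)%R ->
  normal_prob m s `[x, y[%classic <= (normal_peak s * (y - x))%:E.
Proof.
move=> s0 xy; apply: (le_trans (NBbound m s0 _)) => //.
rewrite lebesgue_measure_itv /=; case: ifPn => _.
  by rewrite -EFinD EFinM.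
by rewrite mule0 lee_fin mulr_ge0 ?normal_peak_ge0 // subr_ge0.
Qed.

Lemma NB_oc (R : realType) (m s x y : R) : (0 < s)%R -> (x <= y)%R ->
  normal_prob m s `]x, y]%classic <= (normal_peak s * (y - x))%:E.
Proof.
move=> s0 xy; apply: (le_trans (NBbound m s0 _)) => //.
rewrite lebesgue_measure_itv /=; case: ifPn => _.
  by rewrite -EFinD EFinM.
by rewrite mule0 lee_fin mulr_ge0 ?normal_peak_ge0 // subr_ge0.
Qed.

Local Close Scope ereal_scope.
Definition Jc (R : realType) (del : R) (n : nat) : set R := `[n%:R * del, n.+1%:R * del[%classic.
Definition Jo (R : realType) (del : R) (n : nat) : set R := `]-(n.+1%:R * del), -(n%:R * del)]%classic.

Lemma Jc_trunc (R : realType) (del x : R) n : 0 < del -> Jc del n x -> Num.truncn (x / del) = n.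
Proof.
move=> d0; rewrite /Jc /= in_itv /= => /andP[h1 h2]; apply: truncn_def.
by rewrite ler_pdivlMr // ltr_pdivrMr // h1 h2.
Qed.

Lemma Jo_trunc (R : realType) (del x : R) n : 0 < del -> Jo del n x -> Num.truncn (- x / del) = n.
Proof.
move=> d0; rewrite /Jo /= in_itv /= => /andP[h1 h2]; apply: truncn_def.
by rewrite ler_pdivlMr // ltr_pdivrMr // lerNr h2 ltrNl h1.
Qed.

Lemma J_cover (R : realType) (del x : R) : 0 < del ->
  Jc del (Num.truncn (x / del)) x \/ Jo del (Num.truncn (- x / del)) x.
Proof.
move=> d0; have [x0|x0] := leP 0 x.
  left; rewrite /Jc /= in_itv /=.
  have /andP[h1 h2] := truncn_itv (divr_ge0 x0 (ltW d0)).
  by rewrite -ler_pdivlMr // -ltr_pdivrMr // h1 h2.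
right; rewrite /Jo /= in_itv /=.
have nx : 0 <= - x by rewrite oppr_ge0 ltW.
have /andP[h1 h2] := truncn_itv (divr_ge0 nx (ltW d0)).
by rewrite ltrNl lerNr -ler_pdivlMr // -ltr_pdivrMr // h1 h2.
Qed.

Lemma Jc_triv (R : realType) (del : R) : 0 < del -> trivIset setT (Jc del).
Proof.
move=> d0 i j _ _ [x [hi hj]].
by rewrite -(Jc_trunc d0 hi) -(Jc_trunc d0 hj).
Qed.

Lemma Jo_triv (R : realType) (del : R) : 0 < del -> trivIset setT (Jo del).
Proof.
move=> d0 i j _ _ [x [hi hj]].
by rewrite -(Jo_trunc d0 hi) -(Jo_trunc d0 hj).
Qed.
Section preimg.
Variables (T R : Type) (n : nat) (E : 'I_n -> T -> R).

Lemma pre_D1 (C : 'I_n -> set R) (S : {set 'I_n}) a : a \in S ->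
  preimg_on E C S = E a @^-1` C a `&` preimg_on E C (S :\ a).
Proof. by move=> aS; rewrite /preimg_on (big_setD1 a aS). Qed.

Lemma pre_eq (C C' : 'I_n -> set R) (S : {set 'I_n}) :
  (forall j, j \in S -> C j = C' j) -> preimg_on E C S = preimg_on E C' S.
Proof. by move=> h; rewrite /preimg_on; apply: eq_bigr => j /h ->. Qed.

Lemma pre_T (S : {set 'I_n}) : preimg_on E (fun=> setT) S = setT.
Proof. by rewrite /preimg_on big1 // => j _; rewrite preimage_setT. Qed.

Lemma pre_I (C C' : 'I_n -> set R) (S : {set 'I_n}) :
  preimg_on E C S `&` preimg_on E C' S = preimg_on E (fun j => C j `&` C' j) S.
Proof. by rewrite /preimg_on -big_split /=; apply: eq_bigr => j _; rewrite preimage_setI. Qed.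
End preimg.

Lemma pre_meas d (T : measurableType d) (R : realType) n (E : 'I_n -> T -> R)
  (C : 'I_n -> set R) (S : {set 'I_n}) :
  (forall j, j \in S -> measurable_fun setT (E j)) -> (forall j, measurable (C j)) ->
  measurable (preimg_on E C S).
Proof.
move=> mE mC; apply: bigsetI_measurable => j jS.
by rewrite -[X in measurable X]setTI; apply: mE.
Qed.

Lemma sum_meas d (T : measurableType d) (R : realType) n (E : 'I_n -> T -> R)
  (k : 'I_n -> R) (S : {set 'I_n}) :
  (forall j, j \in S -> measurable_fun setT (E j)) ->
  measurable_fun setT (fun w => \sum_(i in S) k i * E i w).
Proof.
move=> mE.
have H : measurable_fun setT
   (fun w => \sum_(i <- index_enum 'I_n) (if i \in S then k i * E i w else 0)).
  apply: measurable_sum => i; case: (boolP (i \in S)) => iS /=; last exact: measurable_cst.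
  by apply: measurable_funM; [exact: measurable_cst | exact: mE].
apply: (eq_measurable_fun _ _ H) => w _; by rewrite [RHS]big_mkcond.
Qed.
Lemma PL (R : realType) d (T : measurableType d) (Pr : probability T R) (p : nat)
  (E : 'I_p -> T -> R) (A : {set 'I_p}) (mu s : R) (a : 'I_p) (c : 'I_p -> R) :
  (forall j, measurable_fun setT (E j)) -> 0 < s -> iid_normal_on Pr E A mu s ->
  a \in A -> c a != 0 ->
  Pr.-negligible [set w | \sum_(i in A) c i * E i w = 0].
Proof.
move=> mE s0 iid aA ca.
set A' := A :\ a.
pose NB := normal_prob mu s.
pose Gs : set (set T) := [set S | exists C : 'I_p -> set R,
  (forall j, measurable (C j)) /\ S = preimg_on E C A'].
have mX : forall B, measurable B -> d.-measurable (E a @^-1` B).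
  by move=> B mB; rewrite -[X in measurable X]setTI; apply: mE.
have NBfin : forall B, measurable B -> NB B \is a fin_num.
  by move=> B mB; apply: fin_num_measure.
have F1 : forall C, (forall j, measurable (C j)) -> forall B, measurable B ->
    Pr (E a @^-1` B `&` preimg_on E C A') = (NB B * Pr (preimg_on E C A'))%E.
  move=> C mC B mB.
  pose C1 := fun j => if j == a then B else C j.
  pose C0 := fun j => if j == a then setT else C j.
  have mC1 : forall j, measurable (C1 j) by move=> j; rewrite /C1; case: ifP.
  have mC0 : forall j, measurable (C0 j) by move=> j; rewrite /C0; case: ifP.
  have h1 := iid C1 mC1; have h0 := iid C0 mC0.
  have e1 : preimg_on E C1 A' = preimg_on E C A'.
    by apply: pre_eq => j; rewrite /C1 !inE => /andP[/negbTE -> _].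
  have e0 : preimg_on E C0 A' = preimg_on E C A'.
    by apply: pre_eq => j; rewrite /C0 !inE => /andP[/negbTE -> _].
  have p1 : (\prod_(j in A') NB (C1 j) = \prod_(j in A') NB (C j))%E.
    by apply: eq_bigr => j; rewrite /C1 !inE => /andP[/negbTE -> _].
  have p0 : (\prod_(j in A') NB (C0 j) = \prod_(j in A') NB (C j))%E.
    by apply: eq_bigr => j; rewrite /C0 !inE => /andP[/negbTE -> _].
  rewrite (pre_D1 _ _ aA) (big_setD1 a aA) -/A' e1 p1 /C1 eqxx /= in h1.
  rewrite (pre_D1 _ _ aA) (big_setD1 a aA) -/A' e0 p0 /C0 eqxx /= in h0.
  rewrite preimage_setT setTI probability_setT mul1e in h0.
  by rewrite h1 h0.
have S1 : forall B, measurable B -> forall S, <<s Gs >> S ->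
   d.-measurable S /\ Pr (E a @^-1` B `&` S) = (NB B * Pr S)%E.
  move=> B mB.
  have PT : Pr (E a @^-1` B) = NB B.
    have := F1 (fun _ => setT) (fun _ => measurableT) B mB.
    by rewrite pre_T setIT probability_setT mule1.
  have setIG : setI_closed Gs.
    move=> _ _ [C1 [mC1 ->]] [C2 [mC2 ->]]; exists (fun j => C1 j `&` C2 j); split.
      by move=> j; apply: measurableI.
    by rewrite pre_I.
  have GH : Gs `<=` [set S | d.-measurable S /\ Pr (E a @^-1` B `&` S) = (NB B * Pr S)%E].
    by move=> _ [C [mC ->]]; split; [apply: pre_meas => // j _; exact: mE | exact: F1 C mC B mB].
  have HL : dynkin [set S | d.-measurable S /\ Pr (E a @^-1` B `&` S) = (NB B * Pr S)%E].
    split.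
    - by split => //; rewrite setIT PT probability_setT mule1.
    - move=> S [mS HS]; split; first exact: measurableC.
      rewrite -setDE (measureD (mX B mB) mS); last first.
        by apply: (le_lt_trans (probability_le1 _ (mX B mB))); exact: ltry.
      apply: (@eq_trans _ _ (NB B - NB B * Pr S)%E); first by congr (_ - _)%E; [exact: PT | exact: HS].
      by rewrite probability_setC // muleBr ?mule1 //; exact: NBfin.
    - move=> F tF PF; split.
        by apply: bigcup_measurable => n _; exact: (PF n).1.
      rewrite setI_bigcupr measure_semi_bigcup //; first last.
      + by apply: bigcup_measurable => n _; apply: measurableI; [exact: mX | exact: (PF n).1].
      + exact: trivIset_setIl.
      + by move=> n; apply: measurableI; [exact: mX | exact: (PF n).1].
      rewrite (eq_eseriesr (fun n _ => (PF n).2)).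
      rewrite -(fineK (NBfin B mB)) nneseriesZl; last by move=> n _; exact: measure_ge0.
      rewrite measure_semi_bigcup //.
      + by move=> n; exact: (PF n).1.
      + by apply: bigcup_measurable => n _; exact: (PF n).1.
  move=> S hS.
  by apply: (lambda_system_subset setIG (proj1 (dynkin_lambda_system _) HL) GH).
pose k := fun i => - c i / c a.
pose Z := fun w => \sum_(i in A') k i * E i w.
have S2 : forall I, measurable I -> <<s Gs >> (Z @^-1` I).
  move=> I mI.
  have mZ' : measurable_fun setT (Z : g_sigma_algebraType Gs -> R).
    apply: (@sum_meas _ (g_sigma_algebraType Gs) R p E k A') => j jA' _ D mD.
    rewrite setTI; apply: sub_sigma_algebra.
    exists (fun i => if i == j then D else setT); split.
      by move=> i; case: ifP.
    rewrite (pre_D1 _ _ jA') eqxx (@pre_eq _ _ _ _ _ (fun=> setT)) ?pre_T ?setIT //.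
    by move=> i; rewrite !inE => /andP[/negbTE -> _].
  by have := mZ' measurableT _ mI; rewrite setTI.
have mZ : measurable_fun setT Z by apply: sum_meas => j _; exact: mE.
have HP : forall F : nat -> set R, (forall n, measurable (F n)) -> forall n,
    Pr (E a @^-1` F n `&` Z @^-1` F n) = (NB (F n) * Pr (Z @^-1` F n))%E.
  by move=> F mF n; exact: (S1 _ (mF n) _ (S2 _ (mF n))).2.
have mXZ : forall F : nat -> set R, (forall n, measurable (F n)) -> forall n,
    d.-measurable (E a @^-1` F n `&` Z @^-1` F n).
  by move=> F mF n; apply: measurableI; [exact: mX | exact: (S1 _ (mF n) _ (S2 _ (mF n))).1].
have mZF : forall F : nat -> set R, (forall n, measurable (F n)) -> forall n,
    d.-measurable (Z @^-1` F n).
  by move=> F mF n; exact: (S1 _ (mF n) _ (S2 _ (mF n))).1.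
pose S0 := [set w | E a w = Z w].
have mS0 : d.-measurable S0.
  have := measurable_funB (mE a) mZ measurableT (measurable_set1 0).
  rewrite setTI; congr measurable; apply/seteqP; split => w /=.
    by move/eqP; rewrite subr_eq0 => /eqP.
  by move=> ->; rewrite subrr.
pose pk := normal_peak s.
have pk0 : 0 <= pk by exact: normal_peak_ge0.
have bnd : forall del, 0 < del -> (Pr S0 <= (pk * del + pk * del)%:E)%E.
  move=> del d0.
  have mJc : forall n, measurable (Jc del n) by move=> n; exact: measurable_itv.
  have mJo : forall n, measurable (Jo del n) by move=> n; exact: measurable_itv.
  pose U1 := \bigcup_n (E a @^-1` Jc del n `&` Z @^-1` Jc del n).
  pose U2 := \bigcup_n (E a @^-1` Jo del n `&` Z @^-1` Jo del n).
  have mU1 : d.-measurable U1 by apply: bigcup_measurable => n _; exact: mXZ.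
  have mU2 : d.-measurable U2 by apply: bigcup_measurable => n _; exact: mXZ.
  have sub : S0 `<=` U1 `|` U2.
    move=> w /= Sw; case: (J_cover (Z w) d0) => h.
      by left; exists (Num.truncn (Z w / del)) => //; split => //=; rewrite Sw.
    by right; exists (Num.truncn (- Z w / del)) => //; split => //=; rewrite Sw.
  apply: (le_trans (le_measure Pr (mem_set mS0) (mem_set (measurableU _ _ mU1 mU2)) sub)).
  apply: (le_trans (measureU2 _ mU1 mU2)); rewrite EFinD; apply: leeD.
  - apply: (GRID (HP _ mJc) (mXZ _ mJc) (mZF _ mJc) (Jc_triv d0)); last by move=> n; exact: measure_ge0.
    move=> n; apply: (le_trans (NB_co mu s0 _)).
      by rewrite ler_pM2r // ler_nat.
    by rewrite lee_fin -mulrBl -natrB // subSnn mul1r.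
  - apply: (GRID (HP _ mJo) (mXZ _ mJo) (mZF _ mJo) (Jo_triv d0)); last by move=> n; exact: measure_ge0.
    move=> n; apply: (le_trans (NB_oc mu s0 _)).
      by rewrite lerN2 ler_pM2r // ler_nat.
    by rewrite lee_fin opprK addrC -mulrBl -natrB // subSnn mul1r.
have P0 : Pr S0 = 0%E.
  apply/eqP; rewrite eq_le measure_ge0 andbT; apply/lee_addgt0Pr => e e0.
  have pk1 : 0 < pk + 1 by rewrite ltr_wpDl.
  have d0 : 0 < e / (2 * (pk + 1)) by rewrite divr_gt0 // mulr_gt0.
  apply: (le_trans (bnd _ d0)); rewrite add0e lee_fin.
  have -> : pk * (e / (2 * (pk + 1))) + pk * (e / (2 * (pk + 1))) = e * (pk / (pk + 1)).
    by field; rewrite gt_eqF.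
  by rewrite ler_piMr ?ltW // ltr_pdivrMr // mul1r ltrDl.
exists S0; split => // w /= H0.
rewrite (big_setD1 a aA) /= -/A' in H0.
rewrite /S0 /Z /k /=.
have -> : \sum_(i in A') - c i / c a * E i w = - (\sum_(i in A') c i * E i w) / c a.
  rewrite mulNr mulr_suml -sumrN; apply: eq_bigr => i _; ring.
have -> : \sum_(i in A') c i * E i w = - (c a * E a w) by apply/eqP; rewrite -addr_eq0 addrC H0.
by rewrite opprK mulrAC divff // mul1r.
Qed.
Section LA.
Variables (R : realType) (p q : nat) (G : 'M[R]_(q, p)).
Hypothesis mds : MDS_gen G.

Lemma LA0 (y : 'rV[R]_q) (F : {set 'I_p}) :
  (q <= #|F|)%N -> (forall i, i \in F -> (y *m G) 0 i = 0) -> y = 0.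
Proof.
move=> qF yF.
pose f := fun k : 'I_q => (enum_val (widen_ord qF k) : 'I_p).
have finj : injective f.
  by move=> k1 k2 /enum_val_inj /(congr1 val) /= /val_inj.
have := @mds f finj; rewrite row_free_unit unitmx_tr => U.
have H0 : y *m colsub f G = 0.
  apply/rowP => k; rewrite !mxE.
  transitivity ((y *m G) 0 (f k)); last exact: yF (f k) (enum_valP _).
  by rewrite !mxE; apply: eq_bigr => l _; rewrite !mxE.
by rewrite -[y]mulmx1 -(mulmxV U) mulmxA H0 mul0mx.
Qed.

Lemma LA0c (x : 'cV[R]_q) (F : {set 'I_p}) :
  (q <= #|F|)%N -> (forall i, i \in F -> (G^T *m x) i 0 = 0) -> G^T *m x = 0.
Proof.
move=> qF xF; suff -> : x = 0 by rewrite mulmx0.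
apply: trmx_inj; rewrite trmx0; apply: (@LA0 _ F qF) => i iF; have := xF i iF.
by move=> <-; rewrite !mxE; apply: eq_bigr => k _; rewrite !mxE mulrC.
Qed.
End LA.
Section LA1.
Variables (R : realType) (p q : nat) (G : 'M[R]_(q, p)).
Hypothesis mds : MDS_gen G.

Lemma LA1 (B : {set 'I_p}) (a : 'I_p) :
  (#|B| + q < p)%N -> a \notin B ->
  exists c : 'cV[R]_p, [/\ c a 0 != 0, G *m c = 0 & forall b, b \in B -> c b 0 = 0].
Proof.
move=> Bq aB.
pose D : 'M[R]_p := diag_mx (\row_i ((i \in B)%:R)).
pose M := col_mx G D.
pose ea : 'rV[R]_p := delta_mx 0 a.
have nsub : ~~ (ea <= M)%MS.
  apply/negP => /submxP [u Hu].
  move: Hu; rewrite -[u]hsubmxK mul_row_col.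
  set y := lsubmx u; set r := rsubmx u => Hu.
  have rD i : (r *m D) 0 i = r 0 i * (i \in B)%:R by rewrite mul_mx_diag !mxE.
  have y0 : y = 0.
    apply: (@LA0 _ _ _ _ mds _ (~: (a |: B))).
      have := cardsC (a |: B); rewrite card_ord cardsU1 aB /= => H; move: H Bq; rewrite -addnA; move: (#|~: _|) (#|B|) => k l; lia.
    move=> i; rewrite !inE negb_or => /andP[ia iB].
    move/rowP: (Hu) => /(_ i); rewrite [X in _ = X -> _]mxE rD (negbTE iB) mulr0 addr0 mxE.
    by rewrite (negbTE ia) andbF => <-.
  move/rowP: (Hu) => /(_ a); rewrite [X in _ = X -> _]mxE rD (negbTE aB) mulr0 addr0 y0 mul0mx !mxE !eqxx.
  by move/eqP; rewrite oner_eq0.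
have nz : ea *m cokermx M != 0 by rewrite -submxE.
have [j Hj] : exists j, (ea *m cokermx M) 0 j != 0.
  apply/existsP; move: nz; apply: contraNT => /existsPn H; apply/eqP/rowP => j.
  by move: (H j); rewrite negbK => /eqP ->; rewrite mxE.
exists (col j (cokermx M)).
have MC : M *m col j (cokermx M) = 0 by rewrite colE mulmxA mulmx_coker mul0mx.
move: MC; rewrite mul_col_mx => /eqP; rewrite col_mx_eq0 => /andP[/eqP GC /eqP DC].
split => //.
  move: Hj; rewrite -[X in X != 0](_ : (ea *m col j (cokermx M)) 0 0 = _); last first.
    by rewrite colE mulmxA -colE mxE.
  by rewrite -rowE mxE.
move=> b bB; move/colP: (DC) => /(_ b); rewrite /= mul_diag_mx !mxE bB mul1r => ->.
by [].
Qed.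
End LA1.



Definition wset (R : ringType) p (e : 'cV[R]_p) : {set 'I_p} := [set i | e i 0 != 0]%SET.
Definition wt (R : ringType) p (e : 'cV[R]_p) := #|wset e|.

Lemma cv_rearr (R : ringType) n (a b c e : 'cV[R]_n) : a + b = c + e -> b = (c - a) + e.
Proof. by move=> H; rewrite addrAC -H addrAC subrr add0r. Qed.

Theorem theorem3 (R : realType) (p q : nat) (G : 'M[R]_(q, p)) :
  (1 <= q)%N -> (q < p)%N -> MDS_gen G ->
  exists dec : 'cV[R]_p -> dec_out R p,
  forall (A : {set 'I_p})
         (d : measure_display) (T : measurableType d) (Pr : probability T R)
         (Qv : 'I_q -> T -> R) (E : 'I_p -> T -> R) (mu s : R),
    (forall i, measurable_fun setT (Qv i)) ->
    (forall j, measurable_fun setT (E j)) ->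
    0 < s ->
    (forall j, j \notin A -> forall w, E j w = 0) ->
    iid_normal_on Pr E A mu s ->
    indep_vecs Pr Qv [set: 'I_q] E A ->
    let Z := fun w => G^T *m vec_of Qv w + vec_of E w in
    [/\ A != finset.set0 -> {ae Pr, forall w, dec (Z w) <> NoErrors},
        (#|A| <= p - q - 1)%N ->
          {ae Pr, forall w, dec_estimate (dec (Z w)) = Some (vec_of E w)}
      & (p - q - 1 < #|A|)%N -> {ae Pr, forall w, dec (Z w) = Failure}].
Proof.
move=> q1 qp mds.
pose dec := fun z : 'cV[R]_p =>
  match pselect (exists x : 'cV[R]_q, z = G^T *m x) with left _ => NoErrors
  | right _ => match pselect (exists e : 'cV[R]_p, (wt e + q < p)%N /\
                         exists x : 'cV[R]_q, z = G^T *m x + e) with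
       | left H => Estimate (projT1 (cid H))
       | right _ => Failure end end.
have decN : forall z, (exists x, z = G^T *m x) -> dec z = NoErrors.
  by move=> z H; rewrite /dec; case: pselect.
have decE : forall z, ~ (exists x, z = G^T *m x) ->
    (exists e : 'cV[R]_p, (wt e + q < p)%N /\ exists x : 'cV[R]_q, z = G^T *m x + e) ->
    exists e, dec z = Estimate e /\ (wt e + q < p)%N /\ exists x : 'cV[R]_q, z = G^T *m x + e.
  move=> z H1 H2; rewrite /dec; case: pselect => // _.
  case: pselect => // He; by case: (cid He) => e0 He0; exists e0.
have decF : forall z, ~ (exists x, z = G^T *m x) ->
    ~ (exists e : 'cV[R]_p, (wt e + q < p)%N /\ exists x : 'cV[R]_q, z = G^T *m x + e) ->
    dec z = Failure.
  by move=> z H1 H2; rewrite /dec; case: pselect => // _; case: pselect.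
clearbody dec.
exists dec => A d T Pr Qv E mu s mQ mE s0 Eout iid ind Z.
pose Bad (B : {set 'I_p}) (w : T) := exists (x : 'cV[R]_q) (e : 'cV[R]_p),
  (forall i, i \notin B -> e i 0 = 0) /\ vec_of E w = G^T *m x + e.
have key : forall B : {set 'I_p}, {ae Pr, forall w,
    (#|B| + q < p)%N -> ~~ (A \subset B) -> ~ Bad B w}.
  move=> B; have [BA|nBA] := boolP (A \subset B); first by apply: aeW.
  have [Bq|nBq] := boolP (#|B| + q < p)%N; last by apply: aeW => w [].
  have [a aA aB] := subsetPn nBA.
  have [c [ca Gc cB]] := LA1 mds Bq aB.
  have := PL (c := fun i => c i 0) mE s0 iid aA ca.
  apply: negligibleS => w /= nB; apply: contrapT => nS; apply: nB => _ _ [x [e [eB Ex]]].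
  apply: nS.
  have -> : \sum_(i in A) c i 0 * E i w = ((vec_of E w)^T *m c) 0 0.
    rewrite mxE big_mkcond /=; apply: eq_bigr => i _; rewrite !mxE.
    by case: ifPn => iA; [rewrite mulrC | rewrite Eout // mul0r].
  rewrite Ex raddfD /= trmx_mul trmxK mulmxDl -mulmxA Gc mulmx0 add0r mxE.
  apply: big1 => i _; rewrite !mxE; have [iB|iB] := boolP (i \in B).
    by rewrite cB // mulr0.
  by rewrite eB // mul0r.
have all := filter_forall (ae_filter_ringOfSetsType Pr) key.
have noNo : forall w, (forall B : {set 'I_p}, (#|B| + q < p)%N -> ~~ (A \subset B) -> ~ Bad B w) ->
    A != finset.set0 -> ~ exists x, Z w = G^T *m x.
  move=> w H An0 [x Hx]; apply: (H finset.set0).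
  - by rewrite cards0 add0n.
  - by rewrite finset.subset0.
  exists (x - vec_of Qv w), 0; split; first by move=> i _; rewrite mxE.
  by rewrite addr0 mulmxBr -Hx /Z addrAC subrr add0r.
have badE : forall w (B : {set 'I_p}) (x : 'cV[R]_q) (e : 'cV[R]_p), Z w = G^T *m x + e ->
    (forall i, i \notin B -> e i 0 = 0) -> Bad B w.
  move=> w B x e Hx eB; exists (x - vec_of Qv w), e; split => //.
  by rewrite mulmxBr; apply: cv_rearr.
split.
- move=> An0; apply: filterS all => w H.
  have nx := noNo w H An0.
  have [He|He] := pselect (exists e : 'cV[R]_p, (wt e + q < p)%N /\ exists x : 'cV[R]_q, Z w = G^T *m x + e).
    by have [e [-> _]] := decE _ nx He.
  by rewrite decF.
- move=> Ale; have [A0|An0] := eqVneq A finset.set0.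
    apply: aeW => w.
    have vE0 : vec_of E w = 0.
      by apply/matrixP => i j; rewrite !mxE Eout // A0 inE.
    rewrite decN /= ?vE0 //.
    by exists (vec_of Qv w); rewrite /Z vE0 addr0.
  apply: filterS all => w H.
  have nx := noNo w H An0.
  have He : exists e : 'cV[R]_p, (wt e + q < p)%N /\ exists x : 'cV[R]_q, Z w = G^T *m x + e.
    exists (vec_of E w); split; last by exists (vec_of Qv w).
    have : (wt (vec_of E w) <= #|A|)%N.
      rewrite /wt /wset; apply: subset_leq_card; apply/fintype.subsetP => i; rewrite inE mxE.
      by apply: contraR => iA; rewrite Eout.
    lia.
  have [e [-> [wte [x Hx]]]] := decE _ nx He; rewrite /=; congr Some.
  set B := wset e.
  have eB : forall i, i \notin B -> e i 0 = 0 by move=> i; rewrite inE negbK => /eqP.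
  have AB : A \subset B.
    apply: contraT => nAB; exfalso; apply: (H B) => //; exact: badE Hx eB.
  have Ex := cv_rearr Hx; rewrite -mulmxBr in Ex.
  suff : G^T *m (x - vec_of Qv w) = 0 by move: Ex => -> ->; rewrite add0r.
  apply: (LA0c mds (F := ~: B)).
    have := cardsC B; rewrite card_ord; move: wte; rewrite /wt -/B; lia.
  move=> i; rewrite inE => iB.
  have : vec_of E w i 0 = 0.
    rewrite mxE Eout //; apply: contra iB; exact: (fintype.subsetP AB).
  by rewrite Ex mxE eB // addr0.
- move=> Agt; have An0 : A != finset.set0.
    by rewrite -card_gt0; lia.
  apply: filterS all => w H.
  have nx := noNo w H An0.
  apply: decF => // He.
  case: He => e [wte [x Hx]].
  have eB : forall i, i \notin wset e -> e i 0 = 0.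
    by move=> i; rewrite inE negbK => /eqP.
  apply: (H _ wte); last exact: badE Hx eB.
  apply/negP => /subset_leq_card; move: wte Agt; rewrite /wt; lia.
Qed.
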